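(* There are universal constants $c,C>0$ with the following property. Let $(\Omega,Q,\pi)$ be a reversible Markov chain on a finite set $\Omega$ and $K>0$. Suppose ${\rm Ent}_\pi(f)\le K\,\mathcal E_\pi(f,\log f)$ for every positive function $f$ on $\Omega$ with $f(\omega)\ge c$ for all $\omega\in\Omega$ and $\mathbb E_\pi f=1$. Then $(\Omega,Q,\pi)$ satisfies the MLSI with constant $CK$, i.e. ${\rm Ent}_\pi(f)\le CK\,\mathcal E_\pi(f,\log f)$ for all $f:\Omega\to(0,\infty)$.
   Context: ${\rm Ent}_\pi(f):=\mathbb E_\pi[f(\log f-\log\mathbb E_\pi f)]$ and $\mathcal E_\pi(f,\log f):=\frac12\sum_{\omega,\omega'\in\Omega}\pi(\omega)Q(\omega,\omega')(f(\omega)-f(\omega'))\log\frac{f(\omega)}{f(\omega')}$. *)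

(* Defs.v *)
From mathcomp Require Import all_boot all_order all_algebra.
From mathcomp Require Import all_classical all_reals.
From mathcomp Require Import exp.
Set Implicit Arguments. Unset Strict Implicit. Unset Printing Implicit Defensive.
Import Order.TTheory GRing.Theory Num.Theory.
Local Open Scope ring_scope.

(* A finite reversible Markov chain (Omega, Q, pi): pi is a strictly positive
   probability on Omega, Q(w,w') >= 0 for w <> w' are the transition rates
   (the diagonal of Q plays no role in the Dirichlet form), and detailed
   balance pi(w) Q(w,w') = pi(w') Q(w',w) holds. *)
Definition reversible_chain (R : realType) (Omega : finType)
  (Q : Omega -> Omega -> R) (pi : Omega -> R) : Prop :=
  (forall w, 0 < pi w) /\ (\sum_(w : Omega) pi w = 1) /\
  (forall w w', w != w' -> 0 <= Q w w') /\
  (forall w w', pi w * Q w w' = pi w' * Q w' w).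

Definition Epi (R : realType) (Omega : finType) (pi : Omega -> R)
  (f : Omega -> R) : R := \sum_(w : Omega) pi w * f w.

Definition Ent (R : realType) (Omega : finType) (pi : Omega -> R)
  (f : Omega -> R) : R :=
  Epi pi (fun w => f w * (ln (f w) - ln (Epi pi f))).

Definition Dir (R : realType) (Omega : finType) (Q : Omega -> Omega -> R)
  (pi : Omega -> R) (f : Omega -> R) : R :=
  2^-1 * \sum_(w : Omega) \sum_(w' : Omega)
     pi w * Q w w' * (f w - f w') * ln (f w / f w').

(* Main.v *)
Require Import Defs.
From mathcomp Require Import all_boot all_order all_algebra.
From mathcomp Require Import all_classical all_reals.
From mathcomp Require Import exp.
From mathcomp Require Import ring lra.
Import Order.TTheory GRing.Theory Num.Theory.
Local Open Scope ring_scope.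

Lemma ln_lb (R : realType) (t : R) : 0 < t -> 1 - t^-1 <= ln t.
Proof.
move=> t0.
have h := @le_ln1Dx R (t^-1 - 1).
have : -1 < t^-1 - 1 by rewrite ltrBrDr addrC subrr invr_gt0.
move=> /h; rewrite addrC subrK lnV ?posrE //; lra.
Qed.

Lemma key (R : realType) (x : R) : 0 < x ->
  x * ln x - x + 1 <= 12 * ((1 + x) / 2 * ln ((1 + x) / 2) - (1 + x) / 2 + 1).
Proof.
move=> x0; set y := (1 + x) / 2.
have y0 : 0 < y by rewrite /y; lra.
have hy : x = 2 * y - 1 by rewrite /y; field.
have a : x * ln x <= 2 * x * ln y.
  have : ln x <= ln (y ^+ 2).
    rewrite ler_ln ?posrE ?exprn_gt0 //.
    rewrite hy; have := sqr_ge0 (y - 1); rewrite expr2; nra.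
  rewrite lnXn // mulr2n => /(ler_wpM2l (ltW x0)); nra.
set t := Num.sqrt y.
have t0 : 0 < t by rewrite sqrtr_gt0.
have ty : y = t ^+ 2 by rewrite sqr_sqrtr // ltW.
have lny : ln y = 2 * ln t by rewrite ty lnXn // mulr_natl.
have lt := @ln_lb R t t0.
set u := t^-1 in lt.
have tu : t * u = 1 by rewrite /u divff // gt_eqF.
have u0 : 0 < u by rewrite /u invr_gt0.
have t23 : 2/3 <= t.
  have : 1/2 <= t^+2 by rewrite -ty /y; lra.
  nra.
have b : 10 * (y - 1) <= (8 * y + 2) * ln y.
  rewrite lny.
  have e : (8 * y + 2) * (2 * (1 - u)) - 10 * (y - 1) = 2 * (t - 1)^+2 * (3 * t - 2) * u.
    rewrite ty /u; field. by rewrite gt_eqF.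
  have : 0 <= 2 * (t - 1)^+2 * (3 * t - 2) * u.
    apply: mulr_ge0; last exact: ltW.
    apply: mulr_ge0; first by apply: mulr_ge0 => //; apply: sqr_ge0.
    lra.
  rewrite -e => h.
  have : (8 * y + 2) * (2 * (1 - u)) <= (8 * y + 2) * (2 * ln t).
    apply: ler_wpM2l; first lra.
    lra.
  lra.
rewrite hy in a b |- *. lra.
Qed.

Lemma dir_term (R : realType) (m a b : R) : 0 < m -> 0 < a -> 0 < b ->
  ((1 + a / m) / 2 - (1 + b / m) / 2) * ln (((1 + a / m) / 2) / ((1 + b / m) / 2))
  <= (2 * m)^-1 * ((a - b) * ln (a / b)).
Proof.
move=> m0 a0 b0.
set v := m^-1.
have v0 : 0 < v by rewrite /v invr_gt0.
have e : (1 + a * v) / 2 - (1 + b * v) / 2 = (2 * m)^-1 * (a - b).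
  rewrite /v; field; by rewrite gt_eqF.
rewrite e -(mulrA _ (a - b)). apply: ler_wpM2l; first by rewrite invr_ge0; lra.
have gp : 0 < (1 + a * v) / 2 by nra.
have gq : 0 < (1 + b * v) / 2 by nra.
have gr : 0 < (1 + a * v) / 2 / ((1 + b * v) / 2) by rewrite divr_gt0.
have fr : 0 < a / b by rewrite divr_gt0.
have [ab|ba] := lerP b a.
  apply: ler_wpM2l; first lra.
  rewrite ler_ln ?posrE //.
  rewrite ler_pdivrMr // mulrAC ler_pdivlMr //. nra.
rewrite ler_nM2l; last lra.
rewrite ler_ln ?posrE //.
rewrite ler_pdivrMr // mulrAC ler_pdivlMr //. nra.
Qed.

Theorem mainTheorem7 (R : realType) :
  exists c C : R, 0 < c /\ 0 < C /\
  forall (Omega : finType) (Q : Omega -> Omega -> R) (pi : Omega -> R) (K : R),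
    reversible_chain Q pi -> 0 < K ->
    (forall f : Omega -> R, (forall w, 0 < f w) -> (forall w, c <= f w) ->
        Epi pi f = 1 -> Ent pi f <= K * Dir Q pi f) ->
    forall f : Omega -> R, (forall w, 0 < f w) ->
      Ent pi f <= C * K * Dir Q pi f.
Proof.
exists (1/2), 6; split; first lra; split; first lra.
move=> Omega Q pi K [pi0 [pi1 [Q0 _]]] K0 H f f0.
set m := Epi pi f.
have m0 : 0 < m.
  rewrite /m /Epi.
  have [w _] : exists w : Omega, true.
    case: (pickP (@predT Omega)) => [w _|e]; first by exists w.
    by move: pi1; rewrite big_pred0 // => /eqP; rewrite eq_sym oner_eq0.
  rewrite (bigD1 w) //=; apply: ltr_pwDl; first by apply: mulr_gt0.
  by apply: sumr_ge0 => i _; apply: mulr_ge0; apply: ltW.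
set g := fun w => (1 + f w / m) / 2.
have g0 : forall w, 0 < g w.
  move=> w; rewrite /g; have := f0 w; have : 0 < m^-1 by rewrite invr_gt0.
  nra.
have sumpf : \sum_w pi w * (f w / m) = 1.
  under eq_bigr do rewrite mulrA.
  by rewrite -mulr_suml divff // gt_eqF.
have Eg : Epi pi g = 1.
  rewrite /Epi /g.
  rewrite (eq_bigr (fun w => pi w / 2 + pi w * (f w / m) / 2)); last by move=> i _; ring.
  by rewrite big_split /= -!mulr_suml pi1 sumpf; field.
have gc : forall w, 1/2 <= g w.
  move=> w; rewrite /g; have := f0 w; have : 0 < m^-1 by rewrite invr_gt0.
  nra.
have Hg := H g g0 gc Eg.
pose psi (z : R) := z * ln z - z + 1.
have EntG : Ent pi g = \sum_w pi w * psi (g w).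
  rewrite /Ent Eg ln1.
  rewrite (eq_bigr (fun w => pi w * (g w * ln (g w)) - pi w * g w + pi w)); last first.
    by move=> i _; rewrite /psi; ring.
  rewrite big_split sumrB /= -/(Epi pi g) Eg pi1.
  rewrite subrK /Epi; apply: eq_bigr => i _; by rewrite subr0.
have EntF : Ent pi f = m * \sum_w pi w * psi (f w / m).
  rewrite (eq_bigr (fun w => pi w * (f w / m * ln (f w / m)) - pi w * (f w / m) + pi w)); last first.
    by move=> i _; rewrite /psi; ring.
  rewrite big_split sumrB /= sumpf pi1 subrK mulr_sumr /Ent /Epi -/m.
  apply: eq_bigr => i _.
  rewrite -ln_div ?posrE //.
  have e : f i = m * (f i / m) by field; rewrite gt_eqF.
  rewrite {1}e; ring.
have DirG : Dir Q pi g <= (2 * m)^-1 * Dir Q pi f.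
  rewrite /Dir mulrA [_ * 2^-1]mulrC -mulrA; apply: ler_wpM2l; first lra.
  rewrite mulr_sumr; apply: ler_sum => w _.
  rewrite mulr_sumr; apply: ler_sum => w' _.
  have [->|ne] := eqVneq w w'.
    by rewrite !subrr !mulr0 !mul0r mulr0.
  have pq : 0 <= pi w * Q w w' by apply: mulr_ge0; [apply: ltW | apply: Q0].
  have h := @dir_term R _ _ _ m0 (f0 w) (f0 w').
  set A := ((1 + f w / m) / 2 - (1 + f w' / m) / 2) * _ in h.
  set B := (f w - f w') * _ in h.
  have e1 : pi w * Q w w' * (g w - g w') * ln (g w / g w') = (pi w * Q w w') * A.
    by rewrite /A /g; ring.
  have e2 : (2 * m)^-1 * (pi w * Q w w' * (f w - f w') * ln (f w / f w'))
     = (pi w * Q w w') * ((2 * m)^-1 * B) by rewrite /B; ring.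
  by rewrite e1 e2; apply: ler_wpM2l.
have key2 : \sum_w pi w * psi (f w / m) <= 12 * Ent pi g.
  rewrite EntG mulr_sumr; apply: ler_sum => w _.
  rewrite mulrCA; apply: ler_wpM2l; first exact: ltW.
  apply: key; apply: divr_gt0 => //.
rewrite EntF.
apply: (le_trans (ler_wpM2l (ltW m0) key2)).
apply: (le_trans (ler_wpM2l _ (ler_wpM2l _ Hg))); [nra|lra|].
have : K * Dir Q pi g <= K * ((2 * m)^-1 * Dir Q pi f) by apply: ler_wpM2l => //; lra.
move=> h; apply: (le_trans (ler_wpM2l _ (ler_wpM2l _ h))); [nra|lra|].
set D := Dir Q pi f; set k := (2 * m)^-1.
have hk : m * k = 2^-1 by rewrite /k invfM mulrCA divff ?gt_eqF // mulr1.
have -> : m * (12 * (K * (k * D))) = (m * k) * 12 * K * D by ring.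
rewrite hk; lra.
Qed.
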